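(* Let $B:W_\mathbb{C}\times W_\mathbb{C}\to\mathbb{R}$ be an element of $\mathsf{BIL}$. Then the $2$-cocycle $\Gamma_\ell\times\Gamma_\ell\to\mathcal{O}_\epsilon$, $([h,t],[h',t'])\mapsto B(t,t')$ (constant functions), represents the zero class in $\mathrm{H}^2(\Gamma_\ell,\mathcal{O}_\epsilon)$. That is, the image of $\mathsf{BIL}$ in $\mathrm{H}^2(\Gamma_\ell,\mathcal{O}_\epsilon)$ vanishes.
   Context: Let $\mathbf{k}=\mathbb{Q}(\sqrt d)$ be imaginary quadratic of discriminant $d<0$ inside $\mathbb{C}$, $\delta=\sqrt d$ (principal branch). Let $V$ be a hermitian $\mathbf{k}$-space of signature $(1,n+1)$, $n\ge1$, with form $\langle\cdot,\cdot\rangle$ linear in the left argument, $V_\mathbb{C}=V\otimes\mathbb{C}$; $L$ an even integral full-rank $\mathcal{O}_\mathbf{k}$-lattice with dual $L'$ (w.r.t. the inverse different); $\Gamma$ a finite-index subgroup of the subgroup of $\mathrm{SU}(L)$ acting trivially on $L'/L$. Fix primitive isotropic $\ell\in L$, $\ell'\in L'$ with $\langle\ell,\ell'\rangle\ne0$; $D=L\cap\ell^\perp\cap\ell'^\perp$, $W=D\otimes\mathbf{k}$, $W_\mathbb{C}=W\otimes\mathbb{C}$. Siegel domain $\mathcal{H}=\{(\tau,\sigma)\in\mathbb{C}\times W_\mathbb{C}:2\operatorname{Im}(\tau)|\delta||\langle\ell,\ell'\rangle|^2>-\langle\sigma,\sigma\rangle\}$. The Heisenberg group consists of pairs $[h,t]$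 ($h\in\mathbb{Q}$, $t\in W$) with law $[h,t]\circ[h',t']=[h+h'+|\delta|^{-1}\operatorname{Im}\langle t',t\rangle,t+t']$, acting on $\mathcal{H}$ by $[h,0]:(\tau,\sigma)\mapsto(\tau+h,\sigma)$, $[0,t]:(\tau,\sigma)\mapsto(\tau+\frac{\langle\sigma,t\rangle}{\delta\langle\ell',\ell\rangle}+\frac{\langle t,t\rangle}{2\delta},\sigma+\langle\ell',\ell\rangle t)$. $\Gamma_\ell=\Gamma\cap$ Heisenberg group, assumed to equal $\{[h,t]:h\in N\mathbb{Z},t\in D_{\ell,\Gamma}\}$ for some $N\in\mathbb{Q}_{>0}$ and finite-index sublattice $D_{\ell,\Gamma}\subseteq D$. For $\epsilon>0$, $U_\epsilon(\ell)=\{[z]\in\mathbb{P}V_\mathbb{C}:\langle z,z\rangle>0,\ \langle z,z\rangle|\langle\ell',\ell\rangle|^2/|\langle z,\ell\rangle|^2>1/\epsilon\}$, identified with a $\Gamma_\ell$-stable subset of $\mathcal{H}$ via $z(\tau,\sigma)=\ell'-\delta\tau\langle\ell',\ell\rangle\ell+\sigma$. $\mathcal{O}_\epsilon$ is the ring of holomorphic functions on $U_\epsilon(\ell)$ with the $\Gamma_\ell$-action induced from the action on $U_\epsilon(\ell)$; group cohomology is computed with the standard inhomogeneous complex. $\mathsf{BIL}$ is the real vector space of real bilinear forms on $W_\mathbb{C}$ spanned by forms $\operatorname{Im}H$ with $H$ a hermitian form on $W_\mathbb{C}$ and forms $\operatorname{Im}G$ with $G$ a symmetric complex bilinear form on $W_\mathbb{C}$.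 *)

(* Defs.v *)
From HB Require Import structures.
From mathcomp Require Import all_boot all_order all_algebra.
From mathcomp Require Import complex.
From mathcomp Require Import reals.

Set Implicit Arguments.
Unset Strict Implicit.
Unset Printing Implicit Defensive.

Import Order.TTheory GRing.Theory Num.Theory.
Local Open Scope complex_scope.
Local Open Scope ring_scope.

(* vectors of V_C = C^(n+2) are column vectors 'cV[R[i]]_(n.+2) (coordinates   *)
(* w.r.t. a fixed k-basis of V), so that V = k^(n+2) sits inside V_C.          *)

Section Defs.
Variable R : realType.
Local Notation C := (R[i]).

Definition int_squarefree (m : int) : Prop :=
  forall p : nat, prime p -> ~ ((p * p)%:Z %| m)%Z.

Definition fund_disc (d : int) : Prop :=
  ((d %% 4)%Z = 1 /\ int_squarefree d) \/
  (exists m : int, d = 4 * m /\ ((m %% 4)%Z = 2 \/ (m %% 4)%Z = 3) /\ int_squarefree m).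

(* delta = sqrt d, principal branch: i * sqrt|d| (d < 0) *)
Definition sqd (d : int) : C := 'i%C * (Num.sqrt ((- d)%:~R : R))%:C.

Definition in_k (d : int) (x : C) : Prop :=
  exists a b : rat, x = ratr a + ratr b * sqd d.

Definition in_Ok (d : int) (x : C) : Prop :=
  exists a b : int, x = a%:~R + b%:~R * ((d%:~R + sqd d) / 2%:R).

Definition in_invdiff (d : int) (x : C) : Prop := in_Ok d (sqd d * x).

Variable m : nat.
Local Notation vec := 'cV[C]_m.

Definition mconj (M : 'M[C]_(m, m)) : 'M[C]_(m, m) := map_mx (@conjc R) M.

(* <x, y> = x^T A conj(y) : linear in the left argument *)
Definition hform (A : 'M[C]_m) (x y : vec) : C :=
  (x^T *m A *m map_mx (@conjc R) y) 0 0.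

Definition in_V (d : int) (x : vec) : Prop := forall i, in_k d (x i 0).

(* A is the Gram matrix (w.r.t. a k-basis of V) of a hermitian form on V *)
Definition herm_gram (d : int) (A : 'M[C]_m) : Prop :=
  (forall i j, in_k d (A i j)) /\ A^T = mconj A.

Definition has_signature (A : 'M[C]_m) (p : nat) : Prop :=
  exists P : 'M[C]_m, P \in unitmx /\
    P^T *m A *m mconj P = diag_mx (\row_(i < m) (if (i < p)%N then 1 else -1)).

Definition Zspan (k : nat) (b : 'I_k -> vec) (x : vec) : Prop :=
  exists c : 'I_k -> int, x = \sum_(i < k) (c i)%:~R *: b i.

Definition Ok_lattice (d : int) (L : vec -> Prop) : Prop :=
  (exists (k : nat) (b : 'I_k -> vec),
      (forall i, in_V d (b i)) /\ (forall x, L x <-> Zspan b x)) /\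
  (forall a x, in_Ok d a -> L x -> L (a *: x)) /\
  (exists b : 'I_m -> vec, (forall i, L (b i)) /\
      (\matrix_(i < m, j < m) b j i 0) \in unitmx).

Definition integral_lattice (d : int) (A : 'M[C]_m) (L : vec -> Prop) : Prop :=
  forall x y, L x -> L y -> in_invdiff d (hform A x y).

Definition even_lattice (A : 'M[C]_m) (L : vec -> Prop) : Prop :=
  forall x, L x -> exists z : int, hform A x x = z%:~R.

Definition dual (d : int) (A : 'M[C]_m) (L : vec -> Prop) (x : vec) : Prop :=
  in_V d x /\ forall y, L y -> in_invdiff d (hform A x y).

Definition isotropic (A : 'M[C]_m) (x : vec) : Prop := hform A x x = 0.

Definition primitive (d : int) (P : vec -> Prop) (v : vec) : Prop :=
  P v /\ v != 0 /\
  forall x, P x -> (exists a, in_k d a /\ x = a *: v) -> exists b, in_Ok d b /\ x = b *: v.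

Definition in_SU (d : int) (A : 'M[C]_m) (L : vec -> Prop) (g : 'M[C]_m) : Prop :=
  (forall i j, in_k d (g i j)) /\
  g^T *m A *m mconj g = A /\
  \det g = 1 /\
  (forall x, L x <-> L (g *m x)).

(* the discriminant kernel: elements of SU(L) acting trivially on L'/L *)
Definition disc_kernel (d : int) (A : 'M[C]_m) (L : vec -> Prop) (g : 'M[C]_m) : Prop :=
  in_SU d A L g /\ forall x, dual d A L x -> L (g *m x - x).

Definition finite_index_subgroup (G H : 'M[C]_m -> Prop) : Prop :=
  (forall g, H g -> G g) /\ H 1%:M /\
  (forall g h, H g -> H h -> H (g *m h)) /\
  (forall g, H g -> H (invmx g)) /\
  (exists s : seq 'M[C]_m, forall g, G g -> exists2 r, r \in s & H (invmx r *m g)).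

Definition Dlat (A : 'M[C]_m) (L : vec -> Prop) (l l' : vec) (x : vec) : Prop :=
  L x /\ hform A x l = 0 /\ hform A x l' = 0.

Definition span_over (K : C -> Prop) (P : vec -> Prop) (x : vec) : Prop :=
  exists (k : nat) (a : 'I_k -> C) (v : 'I_k -> vec),
    (forall i, K (a i) /\ P (v i)) /\ x = \sum_(i < k) a i *: v i.

(* W = D (x) k,  W_C = D (x) C, realised inside V resp. V_C *)
Definition in_W d A L l l' := span_over (in_k d) (Dlat A L l l').
Definition in_WC A L l l' := span_over (fun _ => True) (Dlat A L l l').

(* points (tau, sigma) in C x W_C; the constant <l', l> *)
Definition Siegel d A L (l l' : vec) (p : C * vec) : Prop :=
  in_WC A L l l' p.2 /\
  - complex.Re (hform A p.2 p.2) <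
    2 * complex.Im p.1 * Num.sqrt ((- d)%:~R : R) * Normc.normc (hform A l l') ^+ 2.

Definition zvec d A (l l' : vec) (p : C * vec) : vec :=
  l' - (sqd d * p.1 * hform A l' l) *: l + p.2.

(* action of the Heisenberg element [h, t] (h in Q viewed in C, t in W) *)
Definition heis_act d A (l l' : vec) (h : C) (t : vec) (p : C * vec) : C * vec :=
  (p.1 + h + hform A p.2 t / (sqd d * hform A l' l) + hform A t t / (2%:R * sqd d),
   p.2 + hform A l' l *: t).

Definition heis_mul1 d A (h : C) (t : vec) (h' : C) (t' : vec) : C :=
  h + h' + (complex.Im (hform A t' t) / Num.sqrt ((- d)%:~R : R))%:C.

(* g in U(V) is the Heisenberg element [h,t]: it fixes l and induces the
   action of [h,t] on the Siegel domain via [z] |-> [g z] *)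
Definition is_heis d A L (l l' : vec) (g : 'M[C]_m) (h : C) (t : vec) : Prop :=
  g *m l = l /\
  forall p, Siegel d A L l l' p ->
    exists lam : C, g *m zvec d A l l' p = lam *: zvec d A l l' (heis_act d A l l' h t p).

Definition Ueps d A L (l l' : vec) (eps : R) (p : C * vec) : Prop :=
  Siegel d A L l l' p /\
  let z := zvec d A l l' p in
  0 < complex.Re (hform A z z) /\ complex.Im (hform A z z) = 0 /\
  1 / eps < complex.Re (hform A z z) * Normc.normc (hform A l' l) ^+ 2
            / Normc.normc (hform A z l) ^+ 2.

Definition vnorm (p : C * vec) : R := Normc.normc p.1 + \sum_(i < m) Normc.normc (p.2 i 0).

Definition holo_on (WC : vec -> Prop) (U : C * vec -> Prop) (f : C * vec -> C) : Prop :=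
  forall p, U p -> exists (a : C) (lam : vec),
    forall e : R, 0 < e -> exists2 r : R, 0 < r &
      forall (u : C) (w : vec), WC w -> vnorm (u, w) < r ->
        Normc.normc (f (p.1 + u, p.2 + w) - f p - (a * u + (lam^T *m w) 0 0)) <= e * vnorm (u, w).

Definition herm_on (WC : vec -> Prop) (H : vec -> vec -> C) : Prop :=
  (forall a x y z, WC x -> WC y -> WC z -> H (a *: x + y) z = a * H x z + H y z) /\
  (forall x y, WC x -> WC y -> H y x = conjc (H x y)).

Definition symbil_on (WC : vec -> Prop) (G : vec -> vec -> C) : Prop :=
  (forall a x y z, WC x -> WC y -> WC z -> G (a *: x + y) z = a * G x z + G y z) /\
  (forall x y, WC x -> WC y -> G y x = G x y).

Definition in_BIL (WC : vec -> Prop) (B : vec -> vec -> R) : Prop :=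
  exists (k1 k2 : nat) (a : 'I_k1 -> R) (H : 'I_k1 -> vec -> vec -> C)
         (b : 'I_k2 -> R) (G : 'I_k2 -> vec -> vec -> C),
    (forall i, herm_on WC (H i)) /\ (forall j, symbil_on WC (G j)) /\
    forall x y, WC x -> WC y ->
      B x y = \sum_(i < k1) a i * complex.Im (H i x y)
            + \sum_(j < k2) b j * complex.Im (G j x y).

Definition finite_index_sublattice (D Dg : vec -> Prop) : Prop :=
  (forall x, Dg x -> D x) /\ (Dg 0) /\ (forall x y, Dg x -> Dg y -> Dg (x - y)) /\
  (exists s : seq vec, forall x, D x -> exists2 y, y \in s & Dg (x - y)).

Definition in_Gamma_l (N : rat) (Dg : vec -> Prop) (h : C) (t : vec) : Prop :=
  (exists z : int, h = ratr N * z%:~R) /\ Dg t.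

End Defs.

(* Main.v *)
Require Import Defs.
From HB Require Import structures.
From mathcomp Require Import all_boot all_order all_algebra.
From mathcomp Require Import complex.
From mathcomp Require Import reals.
From Stdlib Require Import Classical.
From mathcomp Require Import zify ring.
From Stdlib Require Import ClassicalEpsilon.
Import Order.TTheory GRing.Theory Num.Theory.
Local Open Scope complex_scope.
Local Open Scope ring_scope.

Section Ext.
Variable R : realType.
Variable m : nat.
Local Notation C := (R[i]).
Local Notation vec := 'cV[C]_m.
Variable P : vec -> Prop.
Local Notation WC := (span_over (fun _ => True) P).

Lemma WC0 : WC 0.
Proof. exists 0%N, (fun _ => 0), (fun _ => 0); split; first by case.
by rewrite big_ord0. Qed.

Lemma WCP x : P x -> WC x.
Proof. move=> Px; exists 1%N, (fun _ => 1), (fun _ => x); split=> //.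
by rewrite big_ord1 scale1r. Qed.

Lemma WCD x y : WC x -> WC y -> WC (x + y).
Proof.
move=> [k1 [a1 [v1 [h1 ->]]]] [k2 [a2 [v2 [h2 ->]]]].
exists (k1 + k2)%N, (fun i => match split i with inl j => a1 j | inr j => a2 j end),
  (fun i => match split i with inl j => v1 j | inr j => v2 j end); split.
  by move=> i; case: (split i) => j; [exact: h1 | exact: h2].
rewrite big_split_ord /=; congr (_ + _); apply: eq_bigr => i _.
  by rewrite (unsplitK (inl _ i)).
by rewrite (unsplitK (inr _ i)).
Qed.

Lemma WCZ a x : WC x -> WC (a *: x).
Proof.
move=> [k1 [a1 [v1 [h1 ->]]]].
exists k1, (fun i => a * a1 i), v1; split => //.
by rewrite scaler_sumr; apply: eq_bigr => i _; rewrite scalerA.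
Qed.

Lemma WCsum k (c : 'I_k -> C) (v : 'I_k -> vec) :
  (forall i, WC (v i)) -> WC (\sum_(i < k) c i *: v i).
Proof.
move=> hv; elim: k c v hv => [|k IH] c v hv; first by rewrite big_ord0; exact: WC0.
rewrite big_ord_recr /=; apply: WCD; first exact: IH.
exact: WCZ.
Qed.

Variable f : vec -> C.
Hypothesis flin : forall a x y, WC x -> WC y -> f (a *: x + y) = a * f x + f y.

Lemma f0 : f 0 = 0.
Proof.
have := @flin 1 0 0 WC0 WC0; rewrite scale1r addr0 mul1r => h.
by apply: (addrI (f 0)); rewrite -h addr0.
Qed.

Lemma fsum k (c : 'I_k -> C) (v : 'I_k -> vec) :
  (forall i, WC (v i)) -> f (\sum_(i < k) c i *: v i) = \sum_(i < k) c i * f (v i).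
Proof.
move=> hv; elim: k c v hv => [|k IH] c v hv; first by rewrite !big_ord0 f0.
rewrite !big_ord_recr /= addrC flin ?IH //; [by rewrite addrC | exact: WCsum].
Qed.

Lemma span_basis_aux n0 k (M : 'M[C]_(k, m)) :
  (m - k <= n0)%N -> row_free M -> (forall i, WC (row i M)^T) ->
  exists k' (M' : 'M[C]_(k', m)), [/\ row_free M', (forall i, WC (row i M')^T) &
     forall w, WC w -> (w^T <= M')%MS].
Proof.
elim: n0 k M => [|n0 IH] k M hk hfree hrows;
 (case: (classic (forall w, WC w -> (w^T <= M)%MS)) => hall;
  [by exists k, M; split | ]);
 (have [w [hw hnw]] : exists w, WC w /\ ~~ (w^T <= M)%MS by
   apply: NNPP => hn; apply: hall => w hw; apply: NNPP => hn2;
   apply: hn; exists w; split => //; apply/negP);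
 (set M2 := col_mx M w^T;
  have hM2 : row_free M2 by
   (apply/eqP/anti_leq; rewrite rank_leq_row /= -(addsmxE M w^T);
   have := mxrank_leqif_sup (addsmxSl M w^T); move/ltn_leqif;
   rewrite addsmx_sub submx_refl (negPf hnw) /= (eqP hfree) addn1 => ->));
 have hkm : (k + 1 <= m)%N by rewrite -{1}(eqP hM2) rank_leq_col.
- by move: hk hkm; clear; lia.
- apply: (IH (k + 1)%N M2).
  + by move: hk hkm; clear; lia.
  + exact: hM2.
  + move=> i; rewrite -(splitK i); case: (split i) => j /=.
    * rewrite rowKu; exact: hrows.
    * rewrite rowKd ord1; have -> : row 0 w^T = w^T by apply/rowP => z; rewrite !mxE.
      by rewrite trmxK.
Qed.

Lemma extend : exists lam : vec, forall w, WC w -> f w = (lam^T *m w) 0 0.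
Proof.
have h0 : row_free (0 : 'M[C]_(0, m)) by rewrite /row_free -leqn0 rank_leq_row.
have [k [M [hfree hrows hspan]]] :=
  @span_basis_aux m 0 (0 : 'M_(0, m)) (leq_subr 0 m) h0 (fun i => match i with Ordinal _ hi => False_ind _ (notF hi) end).
pose v : 'cV[C]_k := \col_i f (row i M)^T.
have hv : (v^T <= M^T)%MS by apply: submx_full; rewrite /row_full mxrank_tr.
exists (v^T *m pinvmx M^T)^T => w hw.
have /submxP [c hc] := hspan w hw.
have hw' : w = M^T *m c^T by rewrite -trmx_mul -hc trmxK.
rewrite trmxK {2}hw' mulmxA mulmxKpV //.
have -> : w = \sum_(j < k) c 0 j *: (row j M)^T.
  by rewrite -[w]trmxK hc mulmx_sum_row linear_sum; apply: eq_bigr => j _; rewrite linearZ.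
rewrite fsum // mxE; apply: eq_bigr => j _; by rewrite !mxE mulrC.
Qed.

End Ext.

Lemma hform_conj (R : realType) (m : nat) (A : 'M[R[i]]_m) (x y : 'cV[R[i]]_m) :
  A^T = mconj A -> hform A y x = conjc (hform A x y).
Proof.
move=> hA; rewrite /hform.
have -> : conjc ((x^T *m A *m map_mx (@conjc R) y) 0 0)
   = (map_mx (@conjc R) (x^T *m A *m map_mx (@conjc R) y)) 0 0.
  by rewrite [RHS]mxE.
rewrite !map_mxM -map_trmx.
have hA' : map_mx (@conjc R) A = A^T by rewrite hA.
rewrite hA'.
have hK : map_mx (@conjc R) (map_mx (@conjc R) y) = y.
  by apply/matrixP => i j; rewrite !mxE conjcK.
rewrite hK [LHS](_ : _ = ((y^T *m A *m map_mx (@conjc R) x)^T) 0 0); last by rewrite [RHS]mxE.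
by rewrite !trmx_mul trmxK mulmxA.
Qed.

Lemma cD (R : realType) (x y : R) : (x + y)%:C = x%:C + y%:C.
Proof. by apply/eqP; rewrite eq_complex /= addr0 !eqxx. Qed.

Lemma cM (R : realType) (x y : R) : (x * y)%:C = x%:C * y%:C.
Proof. by apply/eqP; rewrite eq_complex /= !mulr0 !mul0r subr0 addr0 !eqxx. Qed.

Lemma cSum (R : realType) k (f : 'I_k -> R) : (\sum_(i < k) f i)%:C = \sum_(i < k) (f i)%:C.
Proof.
elim: k f => [|k IH] f; first by rewrite !big_ord0.
by rewrite !big_ord_recr /= cD IH.
Qed.

Theorem proposition1
  (R : realType) (d : int) (n : nat)
  (A : 'M[R[i]]_(n.+2)) (L : 'cV[R[i]]_(n.+2) -> Prop)
  (Gam : 'M[R[i]]_(n.+2) -> Prop) (l l' : 'cV[R[i]]_(n.+2))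
  (N : rat) (Dg : 'cV[R[i]]_(n.+2) -> Prop) (eps : R)
  (B : 'cV[R[i]]_(n.+2) -> 'cV[R[i]]_(n.+2) -> R)
  (hd : d < 0) (hfd : fund_disc d) (hn : (1 <= n)%N)
  (hA : herm_gram d A) (hsig : has_signature A 1)
  (hL : Ok_lattice d L) (hLint : integral_lattice d A L) (hLev : even_lattice A L)
  (hGam : finite_index_subgroup (disc_kernel d A L) Gam)
  (hl : primitive d L l) (hliso : isotropic A l)
  (hl' : primitive d (dual d A L) l') (hl'iso : isotropic A l')
  (hll' : hform A l l' != 0)
  (hN : 0 < N) (hDg : finite_index_sublattice (Dlat A L l l') Dg)
  (hGaml : forall (h : R[i]) (t : 'cV[R[i]]_(n.+2)),
      (exists q : rat, h = ratr q) -> in_W d A L l l' t ->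
      ((exists g, Gam g /\ is_heis d A L l l' g h t) <-> in_Gamma_l N Dg h t))
  (heps : 0 < eps)
  (hB : in_BIL (in_WC A L l l') B) :
  exists F : R[i] -> 'cV[R[i]]_(n.+2) -> (R[i] * 'cV[R[i]]_(n.+2) -> R[i]),
    (forall h t, in_Gamma_l N Dg h t ->
       holo_on (in_WC A L l l') (Ueps d A L l l' eps) (F h t)) /\
    (forall h t h' t', in_Gamma_l N Dg h t -> in_Gamma_l N Dg h' t' ->
       forall p, Ueps d A L l l' eps p ->
         (B t t')%:C =
           F h' t' (heis_act d A l l' (- h) (- t) p)
           - F (heis_mul1 d A h t h' t') (t + t') p
           + F h t p).
Proof.
move: hB => [k1 [k2 [a [H [b [G [hH [hG hBf]]]]]]]].
set WC := in_WC A L l l'.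
have WCDl : forall x, Dlat A L l l' x -> WC x by move=> x hx; exact: WCP.
have WCD' : forall x y, WC x -> WC y -> WC (x + y) by move=> x y; exact: WCD.
set c0 := hform A l' l.
have hc0 : c0 != 0 by rewrite /c0 (@hform_conj R _ A l l' hA.2) conjc_eq0.
have hH1 : forall i x y z, WC x -> WC y -> WC z -> H i (x + y) z = H i x z + H i y z.
  by move=> i x y z hx hy hz; rewrite -[x]scale1r (hH i).1 // mul1r scale1r.
have hH2 : forall i x y z, WC x -> WC y -> WC z -> H i z (x + y) = H i z x + H i z y.
  move=> i x y z hx hy hz; have hxy := WCD' x y hx hy.
  by rewrite ((hH i).2 (x + y) z hxy hz) (hH1 i x y z hx hy hz) rmorphD;
    congr (_ + _); symmetry; apply: (hH i).2.
have hG1 : forall j x y z, WC x -> WC y -> WC z -> G j (x + y) z = G j x z + G j y z.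
  by move=> j x y z hx hy hz; rewrite -[x]scale1r (hG j).1 // mul1r scale1r.
pose S x y := \sum_(i < k1) (a i)%:C * (- H i x y * 'i%C).
pose K x y := - S x y / c0.
pose Phi x y := \sum_(i < k1) (a i)%:C * (((conjc (H i x y)) + H i x y) / 2%:R * 'i%C)
              + \sum_(j < k2) (b j)%:C * (((conjc (G j x y)) - G j x y) / 2%:R * 'i%C).
pose q u := - Phi u u / 2%:R.
have two0 : (2%:R : R[i]) != 0 by rewrite pnatr_eq0.
have hKlin : forall t, WC t -> forall a0 x y, WC x -> WC y -> K (a0 *: x + y) t = a0 * K x t + K y t.
  move=> t Wt a0 x y Wx Wy; rewrite /K /S.
  have -> : \sum_(i < k1) (a i)%:C * (- H i (a0 *: x + y) t * 'i%C) =
     a0 * (\sum_(i < k1) (a i)%:C * (- H i x t * 'i%C)) + \sum_(i < k1) (a i)%:C * (- H i y t * 'i%C).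
    by rewrite mulr_sumr -big_split /=; apply: eq_bigr => i _; rewrite (hH i).1 //; ring.
  by field.
have hK2 : forall x t t', WC x -> WC t -> WC t' -> K x (t + t') = K x t + K x t'.
  move=> x t t' Wx Wt Wt'; rewrite /K /S.
  have -> : \sum_(i < k1) (a i)%:C * (- H i x (t + t') * 'i%C) =
     \sum_(i < k1) (a i)%:C * (- H i x t * 'i%C) + \sum_(i < k1) (a i)%:C * (- H i x t' * 'i%C).
    by rewrite -big_split /=; apply: eq_bigr => i _; rewrite hH2 //; ring.
  by field.
have hPhiS : forall x y, WC x -> WC y -> Phi x y = Phi y x.
  move=> x y Wx Wy; rewrite /Phi; congr (_ + _); apply: eq_bigr => i _.
    by rewrite ((hH i).2 x y) // conjcK addrC.
  by rewrite ((hG i).2 x y).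
have hPhi1 : forall x y z, WC x -> WC y -> WC z -> Phi (x + y) z = Phi x z + Phi y z.
  move=> x y z Wx Wy Wz; rewrite /Phi.
  rewrite (eq_bigr (fun i => (a i)%:C * (((conjc (H i x z)) + H i x z) / 2%:R * 'i%C)
     + (a i)%:C * (((conjc (H i y z)) + H i y z) / 2%:R * 'i%C))); last first.
    by move=> i _; rewrite hH1 // rmorphD; ring.
  rewrite [X in _ + X = _](eq_bigr (fun j => (b j)%:C * (((conjc (G j x z)) - G j x z) / 2%:R * 'i%C)
     + (b j)%:C * (((conjc (G j y z)) - G j y z) / 2%:R * 'i%C))); last first.
    by move=> j _; rewrite hG1 // rmorphD; ring.
  rewrite !big_split /=; ring.
have e5 : forall t t', WC t -> WC t' -> q t + q t' - q (t + t') = Phi t t'.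
  move=> t t' Wt Wt'; have Wtt := WCD' _ _ Wt Wt'.
  have eP : Phi (t + t') (t + t') = Phi t t + 2%:R * Phi t t' + Phi t' t'.
    rewrite (hPhi1 t t' (t + t')) // (hPhiS t (t + t')) // (hPhiS t' (t + t')) //.
    rewrite !hPhi1 // (hPhiS t' t) //; ring.
  by rewrite /q eP; field.
have e6 : forall t t', WC t -> WC t' -> (B t t')%:C = S t t' + Phi t t'.
  move=> t t' Wt Wt'; rewrite hBf // cD !cSum /S /Phi addrA -big_split /=.
  by congr (_ + _); apply: eq_bigr => i _; rewrite cM ImJ_sub; field.
have hlam : forall t, exists lam : 'cV[R[i]]_(n.+2),
    WC t -> forall w, WC w -> K w t = (lam^T *m w) 0 0.
  move=> t; case: (classic (WC t)) => ht; last by exists 0.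
  have [lam hlm] := @extend R n.+2 (Dlat A L l l') (fun w => K w t) (fun a0 x y hx hy => hKlin t ht a0 x y hx hy).
  by exists lam => _; exact: hlm.
pose lamf t := proj1_sig (constructive_indefinite_description _ (hlam t)).
have hlamf : forall t, WC t -> forall w, WC w -> K w t = ((lamf t)^T *m w) 0 0.
  by move=> t; rewrite /lamf; case: constructive_indefinite_description.
refine (ex_intro _ (fun (h : R[i]) (t : 'cV[R[i]]_(n.+2)) (p : R[i] * 'cV[R[i]]_(n.+2)) =>
   q t + ((lamf t)^T *m p.2) 0 0) _).
split.
  move=> h t _ p _; exists 0, (lamf t) => e he; exists 1 => // u w _ _ /=.
  rewrite mulmxDr mxE mul0r add0r.
  have -> : q t + (((lamf t)^T *m p.2) 0 0 + ((lamf t)^T *m w) 0 0) -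
    (q t + ((lamf t)^T *m p.2) 0 0) - ((lamf t)^T *m w) 0 0 = 0 by ring.
  rewrite Normc.normc0; apply: mulr_ge0; first exact: ltW.
  have nc0 : forall z : R[i], 0 <= Normc.normc z by case=> ? ?; exact: sqrtr_ge0.
  by rewrite /vnorm addr_ge0 // sumr_ge0.
move=> h t h' t' [_ ht] [_ ht'] p hp.
have Wt : WC t := WCDl _ (hDg.1 _ ht).
have Wt' : WC t' := WCDl _ (hDg.1 _ ht').
have Wtt := WCD' _ _ Wt Wt'.
have Wp : WC p.2 := hp.1.1.
rewrite /heis_act /= -/c0.
have e1 : ((lamf t')^T *m (p.2 + c0 *: - t)) 0 0 = K p.2 t' - c0 * K t t'.
  have W1 : WC ((-c0) *: t + p.2) := WCD' _ _ (@WCZ _ _ _ (-c0) t Wt) Wp.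
  rewrite (_ : p.2 + c0 *: - t = (-c0) *: t + p.2); last by rewrite scalerN -scaleNr addrC.
  by rewrite -hlamf // hKlin // mulNr addrC.
rewrite e1 -!hlamf // hK2 // e6 // -e5 //.
by rewrite /K; field.
Qed.
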